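(* For every nonempty rooted tree $t$ with $|t|$ vertices, write $\Lambda(t)=\sum_{s=1}^{|t|}\omega_s(t)x^s$. Then $$\omega(t)=\sum_{s\ge1}\frac{(-1)^{s+1}}{s}\,\omega_s(t).$$
   Context: Let $k$ be a field of characteristic $0$. $\mathcal A=k[x]$ with the quasi-shuffle product $\diamond$ determined by $\mathbf 1\diamond u=u\diamond\mathbf 1=u$ and $x^k\diamond x^l=(x^{k-1}\diamond x^l)x+(x^k\diamond x^{l-1})x+(x^{k-1}\diamond x^{l-1})x$ ($k,l\ge1$). $\mathcal H_{CK}$ is the Connes–Kreimer Hopf algebra of rooted forests (free commutative algebra on nonempty non-planar rooted trees, unit the empty forest $\mathbf 1$, counit $\varepsilon$, coproduct by admissible cuts $\Delta_{CK}(u)=\sum v\otimes w$ over decompositions of the vertex set of $u$ into $V\sqcup W$ with no vertex of $V$ strictly below a vertex of $W$). $B_+$ grafts a forest onto a new root; $\Lambda:\mathcal H_{CK}\to\mathcal A$ is the unique unital algebra morphism with $\Lambda(B_+(t_1\cdots t_n))=(\Lambda(t_1)\diamond\cdots\diamond\Lambda(t_n))x$. $\delta$ is the character of $\mathcal H_{CK}$ with $\delta(\bullet)=1$ ($\bullet$ the one-vertex tree) and $\delta(t)=0$ for trees with at least two vertices, and $\omega=\log^*\delta=\sum_{n\ge1}\frac{(-1)^{n+1}}{n}(\delta-\varepsilon)^{*n}$ with $*$ the convolution of $\mathcal H_{CK}^*$. *)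

(* Defs.v *)
From HB Require Import structures.
From mathcomp Require Import all_boot all_order all_algebra.
Set Implicit Arguments. Unset Strict Implicit. Unset Printing Implicit Defensive.
Import Order.TTheory GRing.Theory Num.Theory.
Local Open Scope ring_scope.

(* Rooted trees, represented by planar representatives (children listed in
   some order); all notions below are invariant under reordering children,
   so they are well defined on non-planar trees. A forest is a seq tree
   (the empty forest is the unit 1 of H_CK). *)
Inductive tree := Node of seq tree.

Fixpoint nverts (t : tree) : nat :=
  let: Node ts := t in (sumn (map nverts ts)).+1.

Definition is_leaf (t : tree) : bool := if t is Node [::] then true else false.

(* Trees whose vertices carry a boolean label (a vertex subset V = true-labelled). *)
Inductive ltree := LNode of bool & seq ltree.

Definition prodl (A : Type) (xss : seq (seq A)) : seq (seq A) :=
  foldr (fun xs acc => [seq x :: a | x <- xs, a <- acc]) [:: [::]] xss.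

Fixpoint labelings (t : tree) : seq ltree :=
  let: Node ts := t in
  [seq LNode c ls | c <- [:: true; false], ls <- prodl (map labelings ts)].

Definition flabelings (u : seq tree) : seq (seq ltree) := prodl (map labelings u).

Fixpoint lall (t : ltree) : bool := let: LNode c ts := t in c && all lall ts.

(* Admissibility of V ⊔ W (V = true vertices): no vertex of V strictly below
   (i.e. a proper ancestor of, root drawn at the bottom) a vertex of W;
   equivalently every descendant of a V-vertex is in V. *)
Fixpoint adm (t : ltree) : bool :=
  let: LNode c ts := t in (c ==> all lall ts) && all adm ts.

(* Induced subforest on the vertices labelled b: returns the component
   containing the root (if the root is labelled b) and the other components. *)
Fixpoint cut (b : bool) (t : ltree) : option tree * seq tree :=
  let: LNode c ts := t in
  let rs := map (cut b) ts in
  if c == b then (Some (Node (pmap fst rs)), flatten (map snd rs))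
  else (None, flatten (map (fun r => oapp (fun x => [:: x]) [::] r.1 ++ r.2) rs)).

Definition restr (b : bool) (m : seq ltree) : seq tree :=
  flatten (map (fun t => let r := cut b t in oapp (fun x => [:: x]) [::] r.1 ++ r.2) m).

Section Coeffs.
Variable F : fieldType.

(* Elements of H_CK^* : linear forms, given by their values on basis forests. *)
Definition dual := seq tree -> F.

(* convolution: (f * g)(u) = sum over admissible cuts V ⊔ W of f(u|V) g(u|W) *)
Definition conv (f g : dual) : dual := fun u =>
  \sum_(m <- flabelings u | all adm m) f (restr true m) * g (restr false m).

Definition eps' : dual := fun u => if u is [::] then 1 else 0.

Definition delta : dual := fun u => (all is_leaf u)%:R.

Definition dme : dual := fun u => delta u - eps' u.

Fixpoint convpow (f : dual) (n : nat) : dual :=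
  match n with 0 => eps' | 1 => f | n'.+1 => conv f (convpow f n') end.

(* partial sums of log^* delta = sum_{n>=1} (-1)^(n+1)/n (delta - eps)^{*n} *)
Definition omegaN (N : nat) : dual := fun u =>
  \sum_(1 <= n < N.+1) ((-1) ^+ n.+1 / n%:R) * convpow dme n u.

Fixpoint qsh (k : nat) : nat -> {poly F} :=
  match k with
  | 0 => fun l => 'X^l
  | k'.+1 => fix qk (l : nat) : {poly F} :=
      match l with
      | 0 => 'X^(k'.+1)
      | l'.+1 => (qsh k' l + qk l' + qsh k' l') * 'X
      end
  end.

Definition qs (p q : {poly F}) : {poly F} :=
  \sum_(i < size p) \sum_(j < size q) (p`_i * q`_j) *: qsh i j.

Fixpoint Lam (t : tree) : {poly F} :=
  let: Node ts := t in foldr qs 1 (map Lam ts) * 'X.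

End Coeffs.

(* Main.v *)
Require Import Defs.
From HB Require Import structures.
From mathcomp Require Import all_boot all_order all_algebra.
From Stdlib Require List.
Import GRing.Theory.
Local Open Scope ring_scope.
Set Implicit Arguments. Unset Strict Implicit.

Section Aux.

Definition tree_ind' (P : tree -> Prop)
  (H : forall ts, List.Forall P ts -> P (Node ts)) : forall t, P t :=
  fix rec t := match t with
  | Node ts => H ts ((fix aux ts : List.Forall P ts :=
       match ts with
       | [::] => List.Forall_nil P
       | t :: ts' => List.Forall_cons t (rec t) (aux ts')
       end) ts)
  end.

Definition ltree_ind' (P : ltree -> Prop)
  (H : forall c ts, List.Forall P ts -> P (LNode c ts)) : forall t, P t :=
  fix rec t := match t with
  | LNode c ts => H c ts ((fix aux ts : List.Forall P ts :=
       match ts with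
       | [::] => List.Forall_nil P
       | t :: ts' => List.Forall_cons t (rec t) (aux ts')
       end) ts)
  end.

Fixpoint lallb (b : bool) (t : ltree) : bool :=
  let: LNode c ts := t in (c == b) && all (lallb b) ts.

Fixpoint constl (b : bool) (t : tree) : ltree :=
  let: Node ts := t in LNode b (map (constl b) ts).

Lemma lall_lallb x : lall x = lallb true x.
Proof.
elim/ltree_ind': x => c ts IH /=; congr (_ && _); first by case: c.
by elim: IH => //= x l -> _ ->.
Qed.

Lemma lallb_adm b x : lallb b x -> adm x.
Proof.
elim/ltree_ind': x => c ts IH /= /andP[/eqP-> H].
apply/andP; split.
  case: b H {IH} => H //=.
  by elim: ts H => //= x l IH /andP[Hx Hl]; rewrite lall_lallb Hx IH.
by elim: IH H => //= x l Hx _ IH /andP[H1 H2]; rewrite Hx // IH.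
Qed.

Lemma cut_const b t :
  cut b (constl b t) = (Some t, [::]) /\ cut (~~ b) (constl b t) = (None, [::]).
Proof.
elim/tree_ind': t => ts IH /=; rewrite eqxx.
have -> : (b == ~~ b) = false by clear; case: b.
elim: IH => //= t l [-> ->] _ [[->] ->] //.
Qed.


Lemma catnil_eq (T : Type) (a b : seq T) : a ++ b = [::] -> a = [::] /\ b = [::].
Proof. by case: a. Qed.

Lemma restr_cons b x m : restr b (x :: m) = restr b [:: x] ++ restr b m.
Proof. by rewrite /restr /= cats0. Qed.

Lemma restr_const b u :
  restr b (map (constl b) u) = u /\ restr (~~ b) (map (constl b) u) = [::].
Proof.
elim: u => [|t u [IH1 IH2]] //=.
rewrite restr_cons [restr (~~b) (_ :: _)]restr_cons IH1 IH2 /restr /=.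
by case: (cut_const b t) => -> ->.
Qed.

Lemma cut_none b x : cut b x = (None, [::]) <-> lallb (~~ b) x.
Proof.
elim/ltree_ind': x => c ts IH /=.
case: (boolP (c == b)) => [/eqP->|hc].
  split => //; by case: b {IH}.
have -> : (c == ~~ b) = true by move: hc; clear; case: b; case: c.
rewrite /=; split.
  case; elim: IH => //= x l [H1 _] _ IH.
  case: (cut b x) H1 => o s H1 /=.
  move/catnil_eq => [/catnil_eq [ho ho'] hl].
  rewrite IH // andbT; apply/H1; rewrite ho'; by case: o ho H1.
move=> H; congr pair.
elim: IH H => //= x l [_ H2] _ IH /andP[hx hl].
by rewrite H2 //= IH.
Qed.

Lemma restr_nil b m : restr b m = [::] <-> all (lallb (~~ b)) m.
Proof.
elim: m => [|x m IH] //=.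
rewrite restr_cons; split.
  move/catnil_eq => [h1 /IH ->]; rewrite andbT; apply/cut_none; move: h1.
  rewrite /restr /= cats0; case: (cut b x) => [o s] /= /catnil_eq [h ->].
  by case: o h.
case/andP => /cut_none hx /IH ->; by rewrite cats0 /restr /= hx.
Qed.

Lemma adm_cut_false x : adm x -> (cut false x).2 = [::].
Proof.
elim/ltree_ind': x => c ts IH /= /andP[H1 H2].
case: c H1 => /= H1.
  have : lallb (~~ false) (LNode true ts) by rewrite /= -(eq_all lall_lallb).
  by move/cut_none => /= [].
elim: IH H2 => //= x l Hx _ IH /andP[a b]; by rewrite Hx // IH.
Qed.

Lemma restr_false_adm ls : all adm ls ->
  restr false ls = pmap fst (map (cut false) ls) /\
  flatten (map snd (map (cut false) ls)) = [::].
Proof.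
elim: ls => [|x ls IH] //= /andP[hx hl].
case: (IH hl) => <- ->; rewrite restr_cons /restr /= cats0.
move: (adm_cut_false hx); case: (cut false x) => o s /= ->.
by case: o.
Qed.

Lemma flab_cons t u : flabelings (t :: u) = [seq x :: a | x <- labelings t, a <- flabelings u].
Proof. by []. Qed.

Variable F : fieldType.

Lemma sum_lallb_forest b u (G : seq ltree -> F) :
  List.Forall (fun t => forall (G : ltree -> F),
     \sum_(x <- labelings t | lallb b x) G x = G (constl b t)) u ->
  \sum_(m <- flabelings u | all (lallb b) m) G m = G (map (constl b) u).
Proof.
elim: u G => [|t u IH] G HF.
  by rewrite /flabelings /= big_cons big_nil addr0.
inversion HF as [|? ? Ht Hu]; subst.
rewrite flab_cons big_mkcond big_allpairs_dep /=.
transitivity (\sum_(x <- labelings t | lallb b x) G (x :: map (constl b) u)); last by rewrite Ht.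
rewrite [RHS]big_mkcond /=; apply: eq_bigr => x _.
case: ifP => hx.
  rewrite -(IH (fun a => G (x :: a))) // [RHS]big_mkcond.
  by apply: eq_bigr.
by rewrite big1.
Qed.

Lemma sum_lallb b t (G : ltree -> F) :
  \sum_(x <- labelings t | lallb b x) G x = G (constl b t).
Proof.
elim/tree_ind': t G => ts IH G /=.
rewrite !big_cat !big_map /=.
have H := fun G => sum_lallb_forest G IH.
case: b IH H => IH H /=.
  by rewrite -(H (fun ls => G (LNode true ls))) big_pred0_eq big_nil !addr0.
by rewrite -(H (fun ls => G (LNode false ls))) big_pred0_eq big_nil addr0 add0r.
Qed.

Lemma sum_flallb b u (G : seq ltree -> F) :
  \sum_(m <- flabelings u | all (lallb b) m) G m = G (map (constl b) u).
Proof.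
apply: sum_lallb_forest; elim: u => //= t u IH; constructor => //.
move=> G'; exact: sum_lallb.
Qed.


Implicit Types f g : dual F.

Lemma conv_nil f g : conv f g [::] = f [::] * g [::].
Proof. by rewrite /conv /flabelings /= big_cons big_nil addr0. Qed.

Lemma conv_ext f g g' u : (forall v, g v = g' v) -> conv f g u = conv f g' u.
Proof. by move=> H; apply: eq_bigr => m _; rewrite H. Qed.

Lemma conv_extl f f' g u : (forall v, f v = f' v) -> conv f g u = conv f' g u.
Proof. by move=> H; apply: eq_bigr => m _; rewrite H. Qed.

Lemma conv_cons f g t u : conv f g (t :: u) =
  \sum_(x <- labelings t) \sum_(a <- flabelings u)
     (if adm x && all adm a then
       f (restr true [:: x] ++ restr true a) * g (restr false [:: x] ++ restr false a)
     else 0).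
Proof.
rewrite /conv flab_cons big_mkcond big_allpairs_dep /=.
apply: eq_bigr => x _; apply: eq_bigr => a _.
by rewrite restr_cons [restr false _]restr_cons.
Qed.

Lemma conv1 f g t : conv f g [:: t] =
  \sum_(x <- labelings t | adm x) f (restr true [:: x]) * g (restr false [:: x]).
Proof.
rewrite conv_cons [RHS]big_mkcond; apply: eq_bigr => x _.
by rewrite /flabelings /= big_cons big_nil addr0 andbT !cats0.
Qed.

Definition mult (h : dual F) := h [::] = 1 /\ forall a b, h (a ++ b) = h a * h b.

Lemma conv_mult f g : mult f -> mult g -> mult (conv f g).
Proof.
move=> [f0 fM] [g0 gM].
have Hc : forall t u, conv f g (t :: u) = conv f g [:: t] * conv f g u.
  move=> t u; rewrite conv_cons conv1 [X in _ = X * _]big_mkcond mulr_suml.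
  apply: eq_bigr => x _; rewrite /conv mulr_sumr [RHS]big_mkcond.
  apply: eq_bigr => a _; case: (adm x) => /=; case: (all adm a) => //.
    by rewrite fM gM mulrACA.
  by rewrite mul0r.
split; first by rewrite conv_nil f0 g0 mulr1.
elim=> [|t a IH] b; first by rewrite conv_nil f0 g0 !mul1r.
by rewrite cat_cons Hc IH mulrA -Hc.
Qed.

Lemma eps_restr_true m : eps' F (restr true m) = (all (lallb false) m)%:R.
Proof.
have := restr_nil true m; case: (restr true m) => [|x l] /= [h1 h2].
  by rewrite h1.
by case: (all _ m) h2 => // /(_ isT).
Qed.

Lemma eps_restr_false m : eps' F (restr false m) = (all (lallb true) m)%:R.
Proof.
have := restr_nil false m; case: (restr false m) => [|x l] /= [h1 h2].
  by rewrite h1.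
by case: (all _ m) h2 => // /(_ isT).
Qed.

Lemma all_lallb_adm b m : all (lallb b) m -> all adm m.
Proof. by elim: m => //= x m IH /andP[/lallb_adm -> /IH]. Qed.

Lemma conv_eps_l g u : conv (eps' F) g u = g u.
Proof.
rewrite /conv.
transitivity (\sum_(m <- flabelings u | all (lallb false) m) g (restr false m)).
  rewrite big_mkcond [RHS]big_mkcond; apply: eq_bigr => m _.
  rewrite eps_restr_true; case h: (all (lallb false) m).
    by rewrite (all_lallb_adm h) mul1r.
  by rewrite mul0r; case: ifP.
by rewrite sum_flallb (restr_const false u).1.
Qed.

Lemma conv_eps_r f u : conv f (eps' F) u = f u.
Proof.
rewrite /conv.
transitivity (\sum_(m <- flabelings u | all (lallb true) m) f (restr true m)).
  rewrite big_mkcond [RHS]big_mkcond; apply: eq_bigr => m _.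
  rewrite eps_restr_false; case h: (all (lallb true) m).
    by rewrite (all_lallb_adm h) mulr1.
  by rewrite mulr0; case: ifP.
by rewrite sum_flallb (restr_const true u).1.
Qed.

Lemma convpowS f k u : convpow f k.+1 u = conv f (convpow f k) u.
Proof. by case: k => [|k] //=; rewrite conv_eps_r. Qed.

Lemma conv_addl f1 f2 g u :
  conv (fun v => f1 v + f2 v) g u = conv f1 g u + conv f2 g u.
Proof. by rewrite /conv -big_split /=; apply: eq_bigr => m _; rewrite mulrDl. Qed.

Lemma conv_sumr f n (c : nat -> F) (G : nat -> dual F) u :
  conv f (fun v => \sum_(i < n) c i * G i v) u = \sum_(i < n) c i * conv f (G i) u.
Proof.
rewrite /conv; under eq_bigr do rewrite mulr_sumr.
rewrite exchange_big /=; apply: eq_bigr => i _.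
rewrite mulr_sumr; apply: eq_bigr => m _; by rewrite mulrCA.
Qed.

Lemma conv_node f g ts : conv f g [:: Node ts] = f [:: Node ts] * g [::] +
  \sum_(ls <- flabelings ts | all adm ls) f (restr true ls) * g [:: Node (restr false ls)].
Proof.
rewrite conv1 /= !big_cat !big_map /= [X in _ + (_ + X)]big_nil addr0.
congr (_ + _).
  have -> : \sum_(j <- prodl [seq labelings i | i <- ts] | all lall j && all adm j)
      f (restr true [:: LNode true j]) * g (restr false [:: LNode true j]) =
    \sum_(j <- flabelings ts | all (lallb true) j)
      f (restr true [:: LNode true j]) * g (restr false [:: LNode true j]).
    apply: eq_bigl => j; rewrite (eq_all lall_lallb).
    by case h: (all _ j) => //=; rewrite (all_lallb_adm h).
  rewrite sum_flallb; have [h1 h2] := restr_const true [:: Node ts].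
  by rewrite /= in h1 h2; rewrite h1 h2.
apply: eq_bigr => ls hls.
have [h1 h2] := restr_false_adm hls.
congr (f _ * g _).
  rewrite {1}/restr /= !cats0 /restr -map_comp //.
rewrite h1 {1}/restr /= h2 //.
Qed.


Notation D := (convpow (delta F)).
Notation E := (convpow (dme F)).

Lemma delta_mult : mult (delta F).
Proof.
split => // a b; rewrite /delta all_cat.
by case: (all is_leaf a); case: (all is_leaf b); rewrite /= ?mul1r ?mul0r.
Qed.

Lemma eps_mult : mult (eps' F).
Proof. by split => // [[|x a]] [|y b] /=; rewrite ?mul1r ?mul0r ?mulr0. Qed.

Lemma D_mult k : mult (D k).
Proof.
elim: k => [|[|k] IH]; [exact: eps_mult | exact: delta_mult |].
exact: conv_mult delta_mult IH.
Qed.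

Lemma D_nil k : D k [::] = 1.
Proof. by case: (D_mult k). Qed.

Lemma D_node k ts : D k [:: Node ts] = \sum_(j < k) D j ts.
Proof.
elim: k ts => [|k IH] ts; first by rewrite big_ord0.
rewrite convpowS conv_node D_nil mulr1 big_ord_recl.
congr (_ + _); first by case: ts.
under eq_bigr do rewrite IH mulr_sumr.
rewrite exchange_big; apply: eq_bigr => j _.
by rewrite lift0 convpowS.
Qed.

Lemma sum_widen (G : nat -> F) a b : (a <= b)%N ->
  (forall i, (a <= i < b)%N -> G i = 0) -> \sum_(i < b) G i = \sum_(i < a) G i.
Proof.
move=> hab H; rewrite -!(big_mkord xpredT) (@big_cat_nat _ _ _ a 0 b) // /=.
rewrite [X in _ + X]big_nat_cond [X in _ + X]big1 ?addr0 // => i /andP[h _]; exact: H.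
Qed.

Lemma sum_nat_trunc lo m n (G : nat -> F) : (m <= n)%N ->
  (forall i, (m <= i)%N -> G i = 0) ->
  \sum_(lo <= i < n) G i = \sum_(lo <= i < m) G i.
Proof.
move=> hmn H; case: (leqP lo m) => hlo.
  rewrite (@big_cat_nat _ _ _ m lo n) // /= [X in _ + X]big_nat_cond [X in _ + X]big1 ?addr0 //.
  by move=> i /andP[/andP[h _] _]; exact: H.
rewrite [RHS]big_geq ?(ltnW hlo) // big_nat_cond big1 // => i /andP[/andP[h _] _].
apply: H; exact: leq_trans (ltnW hlo) h.
Qed.

Definition phi k (p : {poly F}) := \sum_(i < k.+1) p`_i * 'C(k, i)%:R.

Lemma phiD k : {morph phi k : x y / x + y >-> x + y}.
Proof. by move=> x y; rewrite /phi -big_split; apply: eq_bigr => i _; rewrite coefD mulrDl. Qed.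

Lemma phi0 k : phi k 0 = 0.
Proof. by rewrite /phi big1 // => i _; rewrite coef0 mul0r. Qed.

Lemma phiZ k c p : phi k (c *: p) = c * phi k p.
Proof. by rewrite /phi mulr_sumr; apply: eq_bigr => i _; rewrite coefZ mulrA. Qed.

Lemma phi_sum k (I : Type) (r : seq I) (G : I -> {poly F}) :
  phi k (\sum_(i <- r) G i) = \sum_(i <- r) phi k (G i).
Proof. exact: (big_morph (phi k) (phiD k) (phi0 k)). Qed.

Lemma phi1 k : phi k 1 = 1.
Proof.
rewrite /phi big_ord_recl coef1 /= bin0 mulr1 big1 ?addr0 // => i _.
by rewrite coef1 mul0r.
Qed.

Lemma phi_X0 p : phi 0 (p * 'X) = 0.
Proof. by rewrite /phi big_ord1 coefMX /= mul0r. Qed.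

Lemma phi_XS k p : phi k.+1 (p * 'X) = phi k (p * 'X) + phi k p.
Proof.
rewrite /phi big_ord_recl coefMX /= mul0r add0r.
rewrite [X in _ = X + _]big_ord_recl coefMX /= mul0r add0r.
under eq_bigr do rewrite coefMX /= binS natrD mulrDr.
rewrite big_split /=; congr (_ + _).
rewrite big_ord_recr /= bin_small // mulr0 addr0.
by apply: eq_bigr => i _; rewrite coefMX.
Qed.

Lemma phi_mulX k p : phi k (p * 'X) = \sum_(j < k) phi j p.
Proof.
elim: k => [|k IH]; first by rewrite phi_X0 big_ord0.
by rewrite phi_XS IH big_ord_recr.
Qed.

Lemma phi_bound k p : phi k p = \sum_(i < size p) p`_i * 'C(k, i)%:R.
Proof.
rewrite /phi.
rewrite -(sum_widen (G := fun i => p`_i * 'C(k, i)%:R) (b := k.+1 + size p)).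
- apply: (sum_widen (G := fun i => p`_i * 'C(k, i)%:R)); first exact: leq_addl.
  by move=> i /andP[h _]; rewrite nth_default // mul0r.
- exact: leq_addr.
- by move=> i /andP[h _]; rewrite bin_small // mulr0.
Qed.

Lemma phi_Xn k l : phi k 'X^l = 'C(k, l)%:R.
Proof.
elim: l k => [|l IH] k; first by rewrite expr0 phi1 bin0.
rewrite exprSr; elim: k => [|k IHk]; first by rewrite phi_X0.
by rewrite phi_XS IHk IH binS natrD.
Qed.

Lemma qshSS i j : qsh F i.+1 j.+1 = (qsh F i j.+1 + qsh F i.+1 j + qsh F i j) * 'X.
Proof. by []. Qed.

Lemma phi_qsh k i j : phi k (qsh F i j) = 'C(k, i)%:R * 'C(k, j)%:R.
Proof.
elim: k i j => [|k IH] [|i] [|j];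
  try by rewrite [qsh F _ _]/= phi_Xn ?bin0 ?mul1r ?mulr1.
  by rewrite qshSS phi_X0 bin0n mul0r.
rewrite qshSS phi_XS -qshSS !phiD !IH !binS !natrD mulrDl !mulrDr.
rewrite -!addrA; congr (_ + _); exact: addrCA.
Qed.

Lemma phi_qs k p q : phi k (qs p q) = phi k p * phi k q.
Proof.
rewrite /qs phi_sum (phi_bound k p) (phi_bound k q) mulr_suml.
apply: eq_bigr => i _; rewrite phi_sum mulr_sumr.
apply: eq_bigr => j _; by rewrite phiZ phi_qsh mulrACA.
Qed.


Lemma D_Lam_forest ts :
  List.Forall (fun t => forall k, D k [:: t] = phi k (Lam F t)) ts ->
  forall k, D k ts = phi k (foldr (@qs F) 1 (map (Lam F) ts)).
Proof.
elim: ts => [|t ts IH] HF k; first by rewrite D_nil phi1.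
inversion HF as [|? ? Ht Hts]; subst.
rewrite /= phi_qs -Ht -IH //.
by case: (D_mult k) => _ <-.
Qed.

Lemma D_Lam t k : D k [:: t] = phi k (Lam F t).
Proof.
elim/tree_ind': t k => ts IH k.
rewrite D_node /= phi_mulX; apply: eq_bigr => j _.
exact: D_Lam_forest.
Qed.

Lemma DE k u : D k u = \sum_(n < k.+1) 'C(k, n)%:R * E n u.
Proof.
elim: k u => [|k IH] u; first by rewrite big_ord1 /= mul1r.
rewrite convpowS (conv_ext (delta F) u IH).
rewrite (conv_extl (f' := fun v => dme F v + eps' F v)); last first.
  by move=> v; rewrite /dme subrK.
rewrite conv_addl conv_eps_l (@conv_sumr (dme F) k.+1 (fun n => 'C(k, n)%:R) (fun n => E n) u).
under [X in X + _ = _]eq_bigr do rewrite -convpowS.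
rewrite [RHS]big_ord_recl bin0 mul1r.
under [X in _ = _ + X]eq_bigr do rewrite lift0 binS natrD mulrDl.
rewrite big_split /=.
rewrite [X in _ + X = _]big_ord_recl bin0 mul1r.
rewrite [X in _ = _ + (X + _)]big_ord_recr /= bin_small // mul0r addr0.
rewrite addrC -!addrA; congr (_ + _); rewrite addrC; congr (_ + _).
Qed.

Lemma binom_inv (a b : nat -> F) :
  (forall k, \sum_(n < k.+1) 'C(k, n)%:R * a n = \sum_(n < k.+1) 'C(k, n)%:R * b n) ->
  forall n, a n = b n.
Proof.
move=> H.
suff S : forall k n, (n < k)%N -> a n = b n by move=> n; exact: (S n.+1).
elim=> [|k IH] n //.
rewrite ltnS leq_eqVlt => /orP[/eqP -> | /IH //].
have := H k; rewrite !big_ord_recr /= binn !mul1r.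
have -> : \sum_(i < k) 'C(k, i)%:R * a i = \sum_(i < k) 'C(k, i)%:R * b i.
  by apply: eq_bigr => i _; rewrite IH.
by move/addrI.
Qed.

Lemma E_Lam t n : E n [:: t] = (Lam F t)`_n.
Proof.
apply: (binom_inv (a := fun n => E n [:: t]) (b := fun n => (Lam F t)`_n)) => k.
rewrite -DE D_Lam /phi; apply: eq_bigr => i _; exact: mulrC.
Qed.



Lemma qsh_coef i j m : (i + j < m)%N -> (qsh F i j)`_m = 0.
Proof.
elim: i j m => [|i IHi] j m.
  by move=> h; rewrite /= coefXn; case: eqP h => // ->; rewrite add0n ltnn.
elim: j m => [|j IHj] m h.
  by rewrite /= coefXn; case: eqP h => // ->; rewrite addn0 ltnn.
rewrite qshSS coefMX; case: m h => [|m] //= h.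
have h1 : (i + j.+1 < m)%N by rewrite -ltnS -addSn.
rewrite !coefD IHi // IHj ?addSnnS // IHi ?addr0 //.
by apply: leq_trans h1; rewrite ltnS addnS.
Qed.

Lemma qs_coef (p q : {poly F}) dp dq m : (forall i, (dp < i)%N -> p`_i = 0) ->
  (forall j, (dq < j)%N -> q`_j = 0) -> (dp + dq < m)%N -> (qs p q)`_m = 0.
Proof.
move=> hp hq hm; rewrite /qs coef_sum big1 // => i _.
rewrite coef_sum big1 // => j _; rewrite coefZ.
case: (leqP i dp) => hi; last by rewrite hp // mul0r mul0r.
case: (leqP j dq) => hj; last by rewrite (hq j) // mulr0 mul0r.
rewrite qsh_coef ?mulr0 //; apply: leq_ltn_trans hm; exact: leq_add.
Qed.

Lemma Lam_coef_forest ts :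
  List.Forall (fun t => forall m, (nverts t < m)%N -> (Lam F t)`_m = 0) ts ->
  forall m, (sumn (map nverts ts) < m)%N -> (foldr (@qs F) 1 (map (Lam F) ts))`_m = 0.
Proof.
elim: ts => [|t ts IH] HF m /= hm.
  by rewrite coef1; case: m hm.
inversion HF as [|? ? Ht Hts]; subst.
apply: (qs_coef (dp := nverts t) (dq := sumn (map nverts ts))) => // j hj; exact: IH.
Qed.

Lemma Lam_coef t m : (nverts t < m)%N -> (Lam F t)`_m = 0.
Proof.
elim/tree_ind': t m => ts IH m /= hm.
rewrite coefMX; case: m hm => [|m] //= hm.
exact: Lam_coef_forest.
Qed.

Lemma size_Lam t : (size (Lam F t) <= (nverts t).+1)%N.
Proof. by apply/leq_sizeP => j hj; apply: Lam_coef. Qed.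

End Aux.

Unset Implicit Arguments.
Set Strict Implicit.

Theorem mainTheorem17 (F : fieldType) (charF : [pchar F] =i pred0)
  (t : tree) (N : nat) :
  (nverts t <= N)%N ->
  omegaN F N [:: t] =
  \sum_(1 <= s < size (Lam F t)) ((-1) ^+ s.+1 / s%:R) * (Lam F t)`_s.
Proof.
move=> hN; rewrite /omegaN.
under eq_bigr do rewrite E_Lam.
apply: sum_nat_trunc.
  by apply: leq_trans (size_Lam F t) _.
by move=> i hi; rewrite nth_default // mulr0.
Qed.
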